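(* In the situation of Lemma 2 (frontier ${}^ts\,y x^h y\,s$, points $I$, $J=I+(0,-1)$, rays $i_n=t(I+n(1,0))$, $j_n=t(J+n(1,-1))$), let $k'_n=t(J+n(1,-1)+(1,0))$ be the value immediately to the right of $j_n$. Then $k'_n-1=(h+1)\,i_n\,i_{n+1}$ for all $n\in\mathbf N$. Consequently, with $k_n=t(J+n(1,-1)+(0,-1))$, the triple $(j_{n+1}+j_n,\;j_{n+1}-j_n,\;k_n+k'_n)$ is a Pythagorean triple: $(j_{n+1}-j_n)^2+(k_n+k'_n)^2=(j_{n+1}+j_n)^2$.
   Context: Cartesian coordinates on $\mathbf Z^2$. The transpose ${}^tw$ of a word reverses it and exchanges $x$ and $y$. Setting: $h\in\mathbf N$, $s$ a right-infinite word over $\{x,y\}$ with the frontier ${}^ts\,yx^hy\,s$ admissible (neither half ultimately constant), embedded as lattice points $P_i$ with $P_i-P_{i-1}=(1,0)$ for a letter $x$ and $(0,1)$ for a letter $y$; $t:\mathbf Z^2\to\mathbf N$ is the unique tiling with $t(a,b+1)t(a+1,b)-t(a,b)t(a+1,b+1)=1$ for all $(a,b)$ and $t(P_i)=1$; $I$ is the path point between $x^h$ and the following $y$ of the middle factor $yx^hy$. *)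

(* Defs.v *)
From HB Require Import structures.
From mathcomp Require Import all_boot all_order all_algebra.
Set Implicit Arguments. Unset Strict Implicit. Unset Printing Implicit Defensive.
Import Order.TTheory GRing.Theory Num.Theory.
Local Open Scope ring_scope.

(* Letters over {x,y}: true encodes x, false encodes y. *)
Definition letter_step (c : bool) : int * int := if c then (1, 0) else (0, 1).

Definition padd (p q : int * int) : int * int := (p.1 + q.1, p.2 + q.2).

(* The bi-infinite word  ^t s . y x^h y . s  indexed by Z:
   w_0 = y, w_1..w_h = x, w_{h+1} = y, w_{h+2+m} = s_m (m >= 0),
   w_{-1-m} = transpose letter of s_m (m >= 0).
   (^t s reverses s and swaps x,y, so reading leftwards from position -1
   we see swapped s_0, s_1, ...). Note Negz m = -(m+1). *)
Definition frontier_letter (h : nat) (s : nat -> bool) (k : int) : bool :=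
  match k with
  | Posz m =>
      if m == 0%N then false
      else if (m <= h)%N then true
      else if m == h.+1 then false
      else s (m - h.+2)%N
  | Negz m => ~~ s m
  end.

Definition admissible_half (s : nat -> bool) : Prop :=
  ~ (exists (N : nat) (c : bool), forall m : nat, (N <= m)%N -> s m = c).

Definition is_SL2_tiling (t : int -> int -> nat) : Prop :=
  forall a b : int,
    (t a (b + 1))%:Z * (t (a + 1) b)%:Z - (t a b)%:Z * (t (a + 1) (b + 1))%:Z = 1.

Definition tile_at (t : int -> int -> nat) (p : int * int) : int := (t p.1 p.2)%:Z.

(* Main.v *)
Require Import Defs.
From HB Require Import structures.
From mathcomp Require Import all_boot all_order all_algebra.
From Stdlib Require Import Ring Classical Lia.
Import Order.TTheory GRing.Theory Num.Theory.
Local Open Scope ring_scope.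

Lemma addE (x y : int) : x + y = intZmod.addz x y. Proof. by []. Qed.
Lemma mulE (x y : int) : x * y = intRing.mulz x y. Proof. by []. Qed.
Lemma oppE (x : int) : - x = intZmod.oppz x. Proof. by []. Qed.
Lemma oneE : (1 : int) = Posz 1. Proof. by []. Qed.
Lemma zeroE : (0 : int) = Posz 0. Proof. by []. Qed.
Lemma int_ring_th : @ring_theory int (Posz 0) (Posz 1) intZmod.addz intRing.mulz
  (fun x y => intZmod.addz x (intZmod.oppz y)) intZmod.oppz (@eq int).
Proof.
constructor; move=> *; rewrite -?addE -?mulE -?oppE -?oneE -?zeroE.
- exact: add0r.
- exact: addrC.
- exact: addrA.
- exact: mul1r.
- exact: mulrC.
- exact: mulrA.
- exact: mulrDl.
- by [].
- exact: subrr.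
Qed.
Add Ring int_ring : int_ring_th.
Ltac iring := rewrite ?expr2 ?exprS ?expr0; rewrite ?addE ?mulE ?oppE ?oneE ?zeroE;
  match goal with |- @eq _ ?x ?y => change (@eq int x y) end; ring.

Definition sl2 (T : int -> int -> int) : Prop :=
  forall a b, T a (b + 1) * T (a + 1) b - T a b * T (a + 1) (b + 1) = 1.

Lemma sl2_pos T : sl2 T -> (forall a b, 0 <= T a b) -> forall a b, 0 < T a b.
Proof.
move=> hS hN a b; rewrite lt0r hN andbT; apply/negP => /eqP E.
have := hS a (b - 1); rewrite subrK E mul0r sub0r => /eqP.
rewrite -(inj_eq oppr_inj) opprK => /eqP E2.
have : 0 <= T a (b - 1) * T (a + 1) b by rewrite mulr_ge0.
by rewrite E2.
Qed.

Lemma ratio_const (g f : int -> int) : (forall y, g y != 0) ->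
  (forall y, g (y + 1) * f y = g y * f (y + 1)) ->
  forall y y', g y' * f y = g y * f y'.
Proof.
move=> gnz st.
have up : forall y (n : nat), g (y + n%:Z) * f y = g y * f (y + n%:Z).
  move=> y; elim=> [|n IH]; first by rewrite addr0.
  rewrite -addn1 PoszD addrA; set z := y + n%:Z in IH *.
  apply: (mulfI (gnz z)).
  transitivity (g (z + 1) * (g z * f y)); first by iring.
  rewrite IH.
  transitivity (g y * (g (z + 1) * f z)); first by iring.
  rewrite st; iring.
move=> y y'; case E: (y' - y) => [n|n].
- have -> : y' = y + n%:Z by rewrite -E; iring.
  exact: up.
- have e : y = y' + (n.+1)%:Z.
    have -> : y = y' - (y' - y) by iring.
    by rewrite E NegzE opprK.
  by rewrite e up.
Qed.

Lemma colrel T : sl2 T -> (forall a b, 0 <= T a b) -> forall a y y',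
  T a y' * (T (a - 1) y + T (a + 1) y) = T a y * (T (a - 1) y' + T (a + 1) y').
Proof.
move=> hS hN a.
apply: (@ratio_const (T a) (fun y => T (a - 1) y + T (a + 1) y)).
  by move=> y; rewrite gt_eqF // sl2_pos.
move=> y /=.
have E1 := hS (a - 1) y; rewrite subrK in E1.
have E2 := hS a y.
apply: subr0_eq.
transitivity ((T a (y + 1) * T (a + 1) y - T a y * T (a + 1) (y + 1))
   - (T (a - 1) (y + 1) * T a y - T (a - 1) y * T a (y + 1))); first by iring.
by rewrite E1 E2 subrr.
Qed.

Lemma rowrel T : sl2 T -> (forall a b, 0 <= T a b) -> forall b x x',
  T x' b * (T x (b - 1) + T x (b + 1)) = T x b * (T x' (b - 1) + T x' (b + 1)).
Proof.
move=> hS hN b.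
apply: (@ratio_const (fun x => T x b) (fun x => T x (b - 1) + T x (b + 1))).
  by move=> y; rewrite gt_eqF // sl2_pos.
move=> x /=.
have E1 := hS x (b - 1); rewrite subrK in E1.
have E2 := hS x b.
apply: subr0_eq.
transitivity ((T x (b + 1) * T (x + 1) b - T x b * T (x + 1) (b + 1))
   - (T x b * T (x + 1) (b - 1) - T x (b - 1) * T (x + 1) b)); first by iring.
by rewrite E1 E2 subrr.
Qed.

Definition setup (h : nat) (s : nat -> bool) (Q : int -> int * int)
  (T : int -> int -> int) : Prop :=
  [/\ (forall k : int, Q k = padd (Q (k - 1)) (letter_step (frontier_letter h s k))),
      sl2 T, (forall a b, 0 <= T a b), (forall k, T (Q k).1 (Q k).2 = 1)
    & Q h%:Z = (0, 0)].

Lemma peq_sub (a b u v c d : int) : (a, b) = padd (u, v) (c, d) -> (u, v) = (a - c, b - d).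
Proof. by rewrite /padd /=; case=> -> ->; congr pair; iring. Qed.

Lemma PoszS1 (k : nat) : Posz k.+1 - 1 = Posz k.
Proof. by rewrite -addn1 PoszD addrK. Qed.

Lemma step_R {h s Q T} : setup h s Q T -> forall m,
  Q (Posz (h.+1 + m.+1)) = padd (Q (Posz (h.+1 + m))) (letter_step (s m)).
Proof.
case=> hQ _ _ _ _ m; rewrite hQ addnS PoszS1; congr padd; congr letter_step.
rewrite /frontier_letter.
have -> : ((h.+1 + m).+1 <= h)%N = false.
  by apply/negbTE/negP => /ssrnat.leP; rewrite -?plusE; lia.
have -> : ((h.+1 + m).+1 == h.+1) = false by apply/negbTE/eqP; rewrite -?plusE; lia.
by congr s; rewrite -?plusE -?minusE; lia.
Qed.

Lemma step_L {h s Q T} : setup h s Q T -> forall m,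
  Q (Negz m) = padd (Q (Negz m.+1)) (letter_step (~~ s m)).
Proof.
case=> hQ _ _ _ _ m; rewrite {1}hQ; congr padd; congr Q.
by rewrite !NegzE -[m.+2]addn1 PoszD; iring.
Qed.

Lemma mid {h s Q T} : setup h s Q T -> forall d, (d <= h)%N ->
  Q (Posz (h - d)) = (- d%:Z, 0).
Proof.
move=> H; have [hQ _ _ _ hQh] := H.
elim=> [|d IH] hd; first by rewrite subn0 hQh oppr0.
have E := hQ (Posz (h - d)).
rewrite IH ?(ltnW hd) // in E.
have e : (h - d = (h - d.+1).+1)%N by rewrite subnSK.
rewrite {1}e PoszS1 /frontier_letter in E.
have hne : (h - d == 0)%N = false by apply/negbTE/eqP; move: hd => /ssrnat.leP; rewrite -?minusE; lia.
rewrite hne leq_subr /letter_step in E.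
move: E; case: (Q _) => u v /peq_sub ->.
by rewrite -addn1 PoszD; congr pair; iring.
Qed.

Lemma Qm1 {h s Q T} : setup h s Q T -> Q (Negz 0) = (- h%:Z, -1).
Proof.
move=> H; have [hQ _ _ _ _] := H.
have E := hQ 0; have E0 := mid H h (leqnn h).
rewrite subnn in E0; rewrite E0 in E.
move: E; rewrite /frontier_letter /letter_step /=.
have -> : (0 - 1 : int) = Negz 0 by [].
case: (Q _) => u v /peq_sub ->; congr pair; iring.
Qed.

Lemma midT {h s Q T} : setup h s Q T -> forall m, (m <= h)%N ->
  T (m%:Z - h%:Z) 0 = 1.
Proof.
move=> H m hm; have [_ _ _ hp _] := H.
have E := mid H (h - m) (leq_subr m h); rewrite subKn // in E.
have := hp (Posz m); rewrite E /= -subzn //.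
by have -> : - (h%:Z - m%:Z) = m%:Z - h%:Z by iring.
Qed.

Lemma rowm1 {h s Q T} : setup h s Q T -> forall m, (m <= h)%N ->
  T (m%:Z - h%:Z) (-1) = m.+1%:Z.
Proof.
move=> H; have [_ hS _ hp _] := H.
elim=> [|m IH] hm.
  by have := hp (Negz 0); rewrite (Qm1 H) /= sub0r.
have E := hS (m%:Z - h%:Z) (-1).
have e1 : (-1 + 1 : int) = 0 by [].
have e2 : m%:Z - h%:Z + 1 = m.+1%:Z - h%:Z by rewrite -addn1 PoszD; iring.
rewrite e1 e2 (midT H m (ltnW hm)) (midT H m.+1 hm) (IH (ltnW hm)) in E.
apply: subr0_eq; rewrite -[m.+2]addn1 PoszD.
transitivity ((1 * T (m.+1%:Z - h%:Z) (-1) - m.+1%:Z * 1) - 1); first by iring.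
by rewrite E subrr.
Qed.

Lemma R0 {h s Q T} : setup h s Q T -> Q (Posz (h.+1 + 0)) = (0, 1).
Proof.
move=> H; have [hQ _ _ _ hQh] := H.
rewrite addn0 hQ PoszS1 hQh /frontier_letter /letter_step.
by rewrite ltnn eqxx /padd /= add0r.
Qed.

Lemma rho {h s Q T} : setup h s Q T -> forall m,
  Q (Negz m) = (- h%:Z + 1 - (Q (Posz (h.+1 + m))).2, -1 - (Q (Posz (h.+1 + m))).1).
Proof.
move=> H; elim=> [|m IH].
  rewrite (Qm1 H) (R0 H) /=; congr pair; iring.
move: IH; rewrite (step_L H m) (step_R H m).
case: (s m); rewrite /letter_step /=;
 case: (Q (Negz m.+1)) => u v; case: (Q (Posz (h.+1 + m))) => a b /=;
 move/esym/peq_sub => ->; rewrite /padd /=; congr pair; iring.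
Qed.

Lemma next_true s : admissible_half s -> forall m0, exists m, (m0 <= m)%N /\ s m = true.
Proof.
move=> adm m0; apply: NNPP => Hn; apply: adm; exists m0, false => m hm.
by apply/negbTE/negP => sm; apply: Hn; exists m.
Qed.

Lemma mirT {h s Q T} : setup h s Q T -> forall d m, s (m + d)%N = true ->
  T ((Q (Posz (h.+1 + m))).1 + 1) (Q (Posz (h.+1 + m))).2
  = T (Q (Negz m)).1 ((Q (Negz m)).2 - 1).
Proof.
move=> H; have [_ hS _ hp _] := H.
have tcase : forall m, s m = true ->
  T ((Q (Posz (h.+1 + m))).1 + 1) (Q (Posz (h.+1 + m))).2
  = T (Q (Negz m)).1 ((Q (Negz m)).2 - 1).
  move=> m sm; have eR := step_R H m; have eL := step_L H m.
  rewrite sm /letter_step /= in eR eL.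
  have h1 := hp (Posz (h.+1 + m.+1)); rewrite eR /= addr0 in h1.
  by rewrite h1 eL /= addr0 addrK hp.
elim=> [|d IH] m hm; first by apply: tcase; rewrite addn0 in hm.
case sm: (s m); first exact: tcase.
have hm' : s (m.+1 + d)%N = true by rewrite addSnnS.
have eR := step_R H m; have eL := step_L H m.
rewrite sm /letter_step /= in eR eL.
move: (hp (Posz (h.+1 + m))) (hp (Posz (h.+1 + m.+1))) (hp (Negz m))
  (hp (Negz m.+1)) (IH m.+1 hm').
rewrite eR eL.
case: (Q (Posz (h.+1 + m))) => a b; case: (Q (Negz m.+1)) => u v /=.
rewrite !addr0 => p1 p2 p3 p4 ih.
have E1 := hS a b; rewrite p1 p2 !mul1r in E1.
have E2 := hS u (v - 1); rewrite subrK p3 p4 !mul1r !mulr1 in E2.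
move/eqP: E1; rewrite subr_eq => /eqP ->.
move/eqP: E2; rewrite subr_eq => /eqP ->.
by rewrite ih.
Qed.

Lemma colentry {h s Q T} : setup h s Q T -> admissible_half s -> forall a : nat,
  exists m, (Q (Posz (h.+1 + m))).1 = a%:Z /\ s m = true.
Proof.
move=> H adm.
have walk : forall d m0 (a : int), s (m0 + d)%N = true ->
    (Q (Posz (h.+1 + m0))).1 = a ->
    exists m, (Q (Posz (h.+1 + m))).1 = a /\ s m = true.
  elim=> [|d IH] m0 a hs ha.
    by exists m0; rewrite addn0 in hs.
  case sm: (s m0); first by exists m0.
  apply: (IH m0.+1); first by rewrite addSnnS.
  by rewrite (step_R H) sm /= addr0.
elim=> [|a [m [ha hs]]].
  have [m [_ hm]] := next_true s adm 0.
  apply: (walk m 0); first by [].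
  by rewrite (R0 H).
have [m' [hm' sm']] := next_true s adm m.+1.
apply: (walk (m' - m.+1)%N m.+1); first by rewrite subnKC.
by rewrite (step_R H) hs /= ha -addn1 PoszD.
Qed.

Definition inv (h : nat) (T : int -> int -> int) (x : int) : Prop :=
  [/\ T x (-1 - x) = h.+1%:Z * T x 0 * T x 0,
      T (x + 1) (-1 - x) = h.+1%:Z * T x 0 * T (x + 1) 0 + 1
    & T x (-1 - x - 1) = h.+1%:Z * T x 0 * T (x + 1) 0 - 1].

Lemma Tnz {h s Q T} : setup h s Q T -> forall a b, T a b != 0.
Proof. by case=> _ hS hN _ _ a b; rewrite gt_eqF // sl2_pos. Qed.

Lemma eq_sub1 {u v w : int} : u - v = w -> u = w + v.
Proof. by move=> <-; rewrite subrK. Qed.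

Lemma core_base {h s Q T} : setup h s Q T -> admissible_half s -> inv h T 0.
Proof.
move=> H adm; have [_ hS hN hp hQh] := H.
have i0 : T 0 0 = 1 by have := hp h%:Z; rewrite hQh.
have A0 : T 0 (-1) = h.+1%:Z by have := rowm1 H h (leqnn h); rewrite subrr.
have S := hS 0 (-1); rewrite (_ : -1 + 1 = 0) // i0 A0 mul1r add0r in S.
have [d [_ sd]] := next_true s adm 0.
have M := mirT H d 0 sd; rewrite (R0 H) (Qm1 H) /= add0r in M.
have S0 := hS 0 0; rewrite add0r in S0.
have p1 : T 0 1 = 1 by have := hp (Posz (h.+1 + 0)); rewrite (R0 H).
rewrite p1 i0 !mul1r in S0.
have Rw := rowrel T hS hN (-1) 0 (- h%:Z).
have q1 : T (- h%:Z) (-1) = 1 by have := hp (Negz 0); rewrite (Qm1 H).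
have q2 : T (- h%:Z) 0 = 1 by have := midT H 0 (leq0n h); rewrite sub0r.
rewrite (_ : -1 + 1 = 0) // q1 q2 i0 A0 -M mul1r in Rw.
rewrite /inv i0 add0r subr0 A0 mulr1 mulr1; split => //.
  by rewrite (eq_sub1 S); iring.
apply: subr0_eq.
transitivity ((T 0 (-1 - 1) + 1 - h.+1%:Z * (T 1 1 + 1))
   - h.+1%:Z * ((T 1 0 - T 1 1) - 1)); first by iring.
by rewrite Rw S0 !subrr mulr0 subr0.
Qed.

Lemma core_step {h s Q T} : setup h s Q T -> admissible_half s -> forall n : nat,
  inv h T n%:Z -> inv h T (n%:Z + 1).
Proof.
move=> H adm n [A0 B0 C0]; have [_ hS hN hp hQh] := H.
set x := n%:Z in A0 B0 C0 *.
set K := h.+1%:Z in A0 B0 C0 *.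
have nz := Tnz H.
have Knz : K != 0 by [].
rewrite /inv (_ : -1 - (x + 1) = -1 - x - 1); last by iring.
have S1 := hS x (-1 - x - 1); rewrite subrK in S1.
move/eq_sub1: S1; rewrite A0 B0 C0 => S1.
have J1 : T (x + 1) (-1 - x - 1) = K * T (x + 1) 0 * T (x + 1) 0.
  apply: (mulfI (_ : K * T x 0 * T x 0 != 0)).
    by rewrite !mulf_neq0.
  rewrite S1; iring.
have Col := colrel T hS hN (x + 1) 0 (-1 - x); rewrite addrK in Col.
have S2 := hS (x + 1) (-1 - x - 1); rewrite subrK in S2.
move/eq_sub1: S2 => S2.
have K1' : T (x + 1 + 1) (-1 - x - 1) = K * T (x + 1) 0 * T (x + 1 + 1) 0 + 1.
  apply: (mulfI (_ : T (x + 1) 0 * T (x + 1) (-1 - x) != 0)).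
    by rewrite !mulf_neq0.
  transitivity (T (x + 1) 0 * (T (x + 1) (-1 - x) * T (x + 1 + 1) (-1 - x - 1)));
    first by iring.
  rewrite S2.
  transitivity (T (x + 1) 0 + T (x + 1) (-1 - x - 1) *
    (T (x + 1) 0 * (T x (-1 - x) + T (x + 1 + 1) (-1 - x)))
    - T (x + 1) (-1 - x - 1) * T (x + 1) 0 * T x (-1 - x)); first by iring.
  rewrite -Col J1 A0 B0; iring.
split => //.
have [m [hm sm]] := colentry H adm n.
have eR := step_R H m; have eL := step_L H m; have Rh := rho H m.
rewrite sm /letter_step /= in eR eL.
have [d [hd sd]] := next_true s adm m.+1.
have sd' : s (m.+1 + (d - m.+1))%N = true by rewrite subnKC.
have Mi := mirT H _ _ sd'.
have L1 : Q (Negz m.+1) = (- h%:Z + 1 - (Q (Posz (h.+1 + m))).2,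
                           -1 - (Q (Posz (h.+1 + m))).1 - 1).
  move: eL; rewrite Rh; case: (Q (Negz m.+1)) => u v /peq_sub ->; congr pair; iring.
have R1 : Q (Posz (h.+1 + m.+1)) = ((Q (Posz (h.+1 + m))).1 + 1, (Q (Posz (h.+1 + m))).2).
  by rewrite eR /padd /= addr0.
have p1 := hp (Posz (h.+1 + m)); have p2 := hp (Posz (h.+1 + m.+1));
have p3 := hp (Negz m); have p4 := hp (Negz m.+1).
rewrite R1 L1 in Mi; rewrite R1 /= in p2; rewrite Rh /= in p3; rewrite L1 /= in p4.
move: hm p1 p2 p3 p4 Mi.
case: (Q (Posz (h.+1 + m))) => a y /= -> p1 p2 p3 p4 Mi.
set z := - h%:Z + 1 - y in p3 p4 Mi.
have Co := colrel T hS hN (x + 1) 0 y; rewrite addrK p1 p2 mul1r in Co.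
have Ro := rowrel T hS hN (-1 - x - 1) (x + 1) z; rewrite subrK p3 p4 -Mi mul1r in Ro.
have Ro' : T (x + 1) (-1 - x - 1 - 1) =
    T (x + 1) (-1 - x - 1) * (T (x + 1 + 1) y + 1) - T (x + 1) (-1 - x).
  by rewrite -Ro addrK.
rewrite Ro' J1 B0; apply: (mulfI (nz (x + 1) 0)).
transitivity (K * T (x + 1) 0 * T (x + 1) 0 * (T (x + 1) 0 * (1 + T (x + 1 + 1) y))
  - T (x + 1) 0 * (K * T x 0 * T (x + 1) 0 + 1)); first by iring.
rewrite -Co; iring.
Qed.

Lemma core {h s Q T} : setup h s Q T -> admissible_half s -> forall n : nat,
  inv h T n%:Z.
Proof.
move=> H adm; elim=> [|n IH]; first exact: (core_base H adm).
by rewrite -addn1 PoszD; apply: (core_step H adm).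
Qed.

Theorem mainTheorem7 (h : nat) (s : nat -> bool)
    (P : int -> int * int) (t : int -> int -> nat) :
  admissible_half s ->
  (forall k : int, P k = padd (P (k - 1)) (letter_step (frontier_letter h s k))) ->
  is_SL2_tiling t ->
  (forall k : int, t (P k).1 (P k).2 = 1%N) ->
  let I := P (h%:Z) in
  let J := padd I (0, -1) in
  let i := fun n : nat => tile_at t (padd I (n%:Z, 0)) in
  let j := fun n : nat => tile_at t (padd J (n%:Z, - n%:Z)) in
  let k' := fun n : nat => tile_at t (padd (padd J (n%:Z, - n%:Z)) (1, 0)) in
  let k := fun n : nat => tile_at t (padd (padd J (n%:Z, - n%:Z)) (0, -1)) in
  forall n : nat,
    k' n - 1 = (h.+1)%:Z * i n * i n.+1 /\
    (j n.+1 - j n) ^+ 2 + (k n + k' n) ^+ 2 = (j n.+1 + j n) ^+ 2.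
Proof.
move=> adm hP hSL hpath I J i j k' k n.
pose T := fun a b : int => (t (I.1 + a) (I.2 + b))%:Z.
pose Q := fun k0 : int => ((P k0).1 - I.1, (P k0).2 - I.2).
have e : forall u v : int, u + (v - u) = v by move=> u v; iring.
have H : setup h s Q T.
  split.
  - by move=> k0; rewrite /Q (hP k0) /padd /=; congr pair; iring.
  - move=> a b; rewrite /T !addrA; exact: hSL.
  - by move=> a b; rewrite /T.
  - by move=> k0; rewrite /T /Q /= !e hpath.
  - by rewrite /Q /I !subrr.
have tile : forall u v, tile_at t (u, v) = T (u - I.1) (v - I.2) by move=> u v; rewrite /T !e.
have [A0 B0 C0] := core H adm n.
have [A1 _ _] := core_step H adm n (core H adm n).
have ei : i n = T n%:Z 0 by rewrite /i /padd tile /=; congr T; iring.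
have ei1 : i n.+1 = T (n%:Z + 1) 0.
  by rewrite /i /padd tile /= -[n.+1]addn1 PoszD; congr T; iring.
have ej : j n = T n%:Z (-1 - n%:Z) by rewrite /j /J /padd tile /=; congr T; iring.
have ej1 : j n.+1 = T (n%:Z + 1) (-1 - (n%:Z + 1)).
  by rewrite /j /J /padd tile /= -[n.+1]addn1 PoszD; congr T; iring.
have ek' : k' n = T (n%:Z + 1) (-1 - n%:Z) by rewrite /k' /J /padd tile /=; congr T; iring.
have ek : k n = T n%:Z (-1 - n%:Z - 1) by rewrite /k /J /padd tile /=; congr T; iring.
split.
  by rewrite ek' ei ei1 B0; iring.
by rewrite ej1 ej ek ek' A1 A0 B0 C0; iring.
Qed.
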